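(* Let $\mathcal X,\mathcal Y$ be Hilbert spaces, $\mathbf A=(A_1,\dots,A_d)\in\mathcal L(\mathcal X)^d$, $C\in\mathcal L(\mathcal X,\mathcal Y)$. (1) If the Stein inequality $H-\sum_{j=1}^dA_j^*HA_j\ge C^*C$ has a strictly positive-definite solution $H\in\mathcal L(\mathcal X)$, then $(C,\mathbf A)$ is output-stable; moreover the observability gramian $\mathcal G_{C,\mathbf A}$ is the unique positive semidefinite solution of the Stein equation $H-\sum_jA_j^*HA_j=C^*C$ if and only if $\mathbf A$ is strongly stable. (2) If the Stein equation $H-\sum_jA_j^*HA_j=C^*C$ has a strictly positive-definite solution $H\in\mathcal L(\mathcal X)$, then $(C,\mathbf A)$ is output-stable and $\mathcal G_{C,\mathbf A}$ is the unique positive semidefinite solution of this Stein equation if and only if $\mathbf A$ is strongly stable; in this case $(C,\mathbf A)$ is moreover exactly observable.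
   Context: $\mathcal F_d$: free semigroup of words on $\{1,\dots,d\}$; for $v=i_N\cdots i_1$, $|v|=N$, $\mathbf A^v=A_{i_N}\cdots A_{i_1}$, $\mathbf A^\emptyset=I$. $(C,\mathbf A)$ is output-stable if $x\mapsto\{C\mathbf A^vx\}_{v\in\mathcal F_d}$ is bounded from $\mathcal X$ into $\ell^2_{\mathcal Y}(\mathcal F_d)$; $\mathcal G_{C,\mathbf A}=\sum_v(\mathbf A^v)^*C^*C\mathbf A^v$ (strong convergence). $\mathbf A$ is strongly stable if $\lim_N\sum_{|v|=N}\|\mathbf A^vx\|^2=0$ for all $x$. Exactly observable: $\mathcal G_{C,\mathbf A}$ strictly positive definite. Strictly positive definite: $\ge\varepsilon I$ for some $\varepsilon>0$. *)

(* Defs.v *)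
From HB Require Import structures.
From mathcomp Require Import all_boot all_order all_algebra.
From mathcomp Require Import all_classical all_reals all_analysis.
From mathcomp Require Import complex.
Import GRing.Theory Num.Theory numFieldNormedType.Exports.

Set Implicit Arguments.
Unset Strict Implicit.
Unset Printing Implicit Defensive.

Local Open Scope ring_scope.
Local Open Scope classical_set_scope.
Local Open Scope complex_scope.

Record hilbert (R : realType) := Hilbert {
  hsp :> lmodType R[i];
  ip : hsp -> hsp -> R[i];
  ipDZl : forall (a : R[i]) (x y z : hsp), ip (a *: x + y) z = a * ip x z + ip y z;
  ip_conj : forall x y : hsp, ip y x = (ip x y)^*;
  ip_ge0 : forall x : hsp, 0 <= ip x x;
  ip_eq0 : forall x : hsp, ip x x = 0 -> x = 0;
  hcomplete : forall u : nat -> hsp,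
    (forall e : R, 0 < e -> exists N : nat, forall m n : nat, (N <= m)%N -> (N <= n)%N ->
        complex.Re (ip (u m - u n) (u m - u n)) < e) ->
    exists l : hsp, forall e : R, 0 < e -> exists N : nat, forall n : nat, (N <= n)%N ->
        complex.Re (ip (u n - l) (u n - l)) < e
}.

Arguments ip {R} h _ _.

Definition hnorm2 (R : realType) (X : hilbert R) (x : X) : R :=
  complex.Re (ip X x x).

Definition is_bop (R : realType) (X Y : hilbert R) (f : X -> Y) : Prop :=
  (forall (a : R[i]) (x y : X), f (a *: x + y) = a *: f x + f y) /\
  exists M : R, forall x : X, hnorm2 (f x) <= M * hnorm2 x.

Definition is_adjoint (R : realType) (X Y : hilbert R) (f : X -> Y) (fstar : Y -> X) : Prop :=
  forall (x : X) (y : Y), ip Y (f x) y = ip X x (fstar y).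

Definition psd (R : realType) (X : hilbert R) (T : X -> X) : Prop :=
  forall x : X, 0 <= ip X (T x) x.

Definition spd (R : realType) (X : hilbert R) (T : X -> X) : Prop :=
  exists eps : R, 0 < eps /\ forall x : X, eps%:C * ip X x x <= ip X (T x) x.

(* Words of the free semigroup F_d: a word v = i_N ... i_1 of length N *)
(* is the N-tuple [:: i_N; ...; i_1];  A^v = A_{i_N} ... A_{i_1}.      *)
Definition Aword (R : realType) (X : hilbert R) (d : nat) (A : 'I_d -> X -> X)
  (v : seq 'I_d) (x : X) : X := foldr (fun i y => A i y) x v.

(* (A^v)^* = A_{i_1}^* ... A_{i_N}^* *)
Definition Aword_adj (R : realType) (X : hilbert R) (d : nat) (Astar : 'I_d -> X -> X)
  (v : seq 'I_d) (y : X) : X := foldl (fun z i => Astar i z) y v.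

(* (C, A) is output-stable: x |-> (C A^v x)_v is bounded X -> l^2_Y(F_d),
   i.e. sum_v ||C A^v x||^2 <= M ||x||^2 (all partial sums, ordered by length). *)
Definition output_stable (R : realType) (X Y : hilbert R) (d : nat)
  (C : X -> Y) (A : 'I_d -> X -> X) : Prop :=
  exists M : R, forall (x : X) (K : nat),
    \sum_(N < K) \sum_(v : N.-tuple 'I_d) hnorm2 (C (Aword A v x)) <= M * hnorm2 x.

Definition strongly_stable (R : realType) (X : hilbert R) (d : nat) (A : 'I_d -> X -> X) : Prop :=
  forall x : X,
    (fun N : nat => \sum_(v : N.-tuple 'I_d) hnorm2 (Aword A v x)) @ \oo --> (0 : R).

(* G is the observability gramian G_{C,A} = sum_v (A^v)^* C^* C A^v,
   the series converging strongly (partial sums over words of length < K). *)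
Definition is_gramian (R : realType) (X Y : hilbert R) (d : nat)
  (C : X -> Y) (Cstar : Y -> X) (A Astar : 'I_d -> X -> X) (G : X -> X) : Prop :=
  is_bop G /\
  forall x : X,
    (fun K : nat => hnorm2 (\sum_(N < K) \sum_(v : N.-tuple 'I_d)
                              Aword_adj Astar v (Cstar (C (Aword A v x))) - G x))
      @ \oo --> (0 : R).

Definition stein_ineq (R : realType) (X Y : hilbert R) (d : nat)
  (C : X -> Y) (Cstar : Y -> X) (A Astar : 'I_d -> X -> X) (H : X -> X) : Prop :=
  psd (fun x => H x - \sum_(j < d) Astar j (H (A j x)) - Cstar (C x)).

Definition stein_eq (R : realType) (X Y : hilbert R) (d : nat)
  (C : X -> Y) (Cstar : Y -> X) (A Astar : 'I_d -> X -> X) (H : X -> X) : Prop :=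
  forall x : X, H x - \sum_(j < d) Astar j (H (A j x)) = Cstar (C x).

Definition unique_psd_stein_sol (R : realType) (X Y : hilbert R) (d : nat)
  (C : X -> Y) (Cstar : Y -> X) (A Astar : 'I_d -> X -> X) (G : X -> X) : Prop :=
  [/\ is_bop G, psd G, stein_eq C Cstar A Astar G &
      forall H : X -> X, is_bop H -> psd H -> stein_eq C Cstar A Astar H -> H =1 G].

(* (C, A) exactly observable: the gramian is strictly positive definite *)
Definition exactly_observable (R : realType) (X : hilbert R) (G : X -> X) : Prop := spd G.

(* Main.v *)
Require Import Defs.
From HB Require Import structures.
From mathcomp Require Import all_boot all_order all_algebra.
From mathcomp Require Import all_classical all_reals all_analysis.
From mathcomp Require Import complex.
Import GRing.Theory Num.Theory numFieldNormedType.Exports.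
Local Open Scope ring_scope.

Import Order.TTheory.
Set Implicit Arguments.
Unset Strict Implicit.
Unset Printing Implicit Defensive.
Local Open Scope classical_set_scope.
Local Open Scope ring_scope.
Local Open Scope complex_scope.

Section Cpx.
Variable R : realType.
Implicit Types (z w : R[i]) (t : R).
Lemma ReD z w : complex.Re (z + w) = complex.Re z + complex.Re w.
Proof. by case: z; case: w. Qed.
Lemma ReN z : complex.Re (- z) = - complex.Re z.
Proof. by case: z. Qed.
Lemma ReB z w : complex.Re (z - w) = complex.Re z - complex.Re w.
Proof. by rewrite ReD ReN. Qed.
Lemma Re0 : complex.Re (0 : R[i]) = 0. Proof. by []. Qed.
Lemma Re_sum I (r : seq I) (P : pred I) (F : I -> R[i]) :
  complex.Re (\sum_(i <- r | P i) F i) = \sum_(i <- r | P i) complex.Re (F i).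
Proof. exact: (big_morph _ ReD Re0). Qed.
Lemma ImD z w : complex.Im (z + w) = complex.Im z + complex.Im w.
Proof. by case: z; case: w. Qed.
Lemma Im0 : complex.Im (0 : R[i]) = 0. Proof. by []. Qed.
Lemma Im_sum I (r : seq I) (P : pred I) (F : I -> R[i]) :
  complex.Im (\sum_(i <- r | P i) F i) = \sum_(i <- r | P i) complex.Im (F i).
Proof. exact: (big_morph _ ImD Im0). Qed.
Lemma ImN z : complex.Im (- z) = - complex.Im z.
Proof. by case: z. Qed.
Lemma ReJ z : complex.Re (z^*) = complex.Re z.
Proof. by case: z. Qed.
Lemma ReCM t z : complex.Re (t%:C * z) = t * complex.Re z.
Proof. by case: z => a b /=; rewrite mul0r subr0. Qed.
Lemma ImCM t z : complex.Im (t%:C * z) = t * complex.Im z.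
Proof. by case: z => a b /=; rewrite mul0r addr0. Qed.
Lemma ReiM z : complex.Re ('i * z) = - complex.Im z.
Proof. by case: z => a b /=; rewrite !mul0r mul1r sub0r. Qed.
Lemma conjCt t : (t%:C)^* = t%:C.
Proof. exact: conjc_real. Qed.
Lemma conji : ('i : R[i])^* = - 'i.
Proof. by apply/eqP; rewrite eq_complex /= oppr0 !eqxx. Qed.
Lemma ge0_C z : 0 <= z -> z = (complex.Re z)%:C.
Proof. by case: z => a b; rewrite lecE /= => /andP[/eqP -> _]. Qed.
Lemma ge0_Re z : 0 <= z -> 0 <= complex.Re z.
Proof. by rewrite lecE => /andP[_]. Qed.
Lemma le_Re z w : z <= w -> complex.Re z <= complex.Re w.
Proof. by rewrite lecE => /andP[_]. Qed.
Lemma le_Im z w : z <= w -> complex.Im z = complex.Im w.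
Proof. by rewrite lecE => /andP[/eqP ->]. Qed.
Lemma ge0_CP z : complex.Im z = 0 -> 0 <= complex.Re z -> 0 <= z.
Proof. by move=> h1 h2; rewrite lecE h1 /= eqxx. Qed.
End Cpx.
From mathcomp Require Import ring lra.

Section Hil.
Variables (R : realType) (X : hilbert R).
Implicit Types (x y z w : X) (a : R[i]) (t : R).

Lemma ipD x y z : ip X (x + y) z = ip X x z + ip X y z.
Proof. by have := ipDZl 1 x y z; rewrite scale1r mul1r. Qed.

Lemma ip0 z : ip X 0 z = 0.
Proof. have := ipD 0 0 z; rewrite addr0 => h. by apply: (addrI (ip X 0 z)); rewrite -h addr0. Qed.

Lemma ipZ a x z : ip X (a *: x) z = a * ip X x z.
Proof. by have := ipDZl a x 0 z; rewrite addr0 ip0 addr0. Qed.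

Lemma ipN x z : ip X (- x) z = - ip X x z.
Proof. by rewrite -scaleN1r ipZ mulN1r. Qed.

Lemma ipB x y z : ip X (x - y) z = ip X x z - ip X y z.
Proof. by rewrite ipD ipN. Qed.

Lemma ip_suml I (r : seq I) (P : pred I) (F : I -> X) z :
  ip X (\sum_(i <- r | P i) F i) z = \sum_(i <- r | P i) ip X (F i) z.
Proof. exact: (big_morph _ (fun x y => ipD x y z) (ip0 z)). Qed.


Lemma cjD (u v : R[i]) : (u + v)^* = u^* + v^*.
Proof. by case: u; case: v => a b c d; rewrite /conjc /=; apply/eqP; rewrite eq_complex /=; apply/andP; split; apply/eqP; ring. Qed.

Lemma cjN (u : R[i]) : (- u)^* = - u^*.
Proof. by case: u => a b; rewrite /conjc /=; apply/eqP; rewrite eq_complex /=; apply/andP; split; apply/eqP; ring. Qed.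

Lemma cjM (u v : R[i]) : (u * v)^* = u^* * v^*.
Proof. by case: u; case: v => a b c d; rewrite /conjc /=; apply/eqP; rewrite eq_complex /=; apply/andP; split; apply/eqP; ring. Qed.

Lemma ipDr z x y : ip X z (x + y) = ip X z x + ip X z y.
Proof. rewrite (ip_conj (x+y) z) (ip_conj x z) (ip_conj y z) ipD. exact: cjD. Qed.

Lemma ipZr z a x : ip X z (a *: x) = a^* * ip X z x.
Proof. rewrite (ip_conj (a *: x) z) (ip_conj x z) ipZ. exact: cjM. Qed.

Lemma ip0r z : ip X z 0 = 0.
Proof. by rewrite (ip_conj 0 z) ip0; apply/eqP; rewrite eq_complex /= oppr0 !eqxx. Qed.

Lemma ipNr z x : ip X z (- x) = - ip X z x.
Proof. rewrite (ip_conj (- x) z) (ip_conj x z) ipN. exact: cjN. Qed.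

Lemma ipBr z x y : ip X z (x - y) = ip X z x - ip X z y.
Proof. by rewrite ipDr ipNr. Qed.

Lemma ip_sumr I (r : seq I) (P : pred I) (F : I -> X) z :
  ip X z (\sum_(i <- r | P i) F i) = \sum_(i <- r | P i) ip X z (F i).
Proof. exact: (big_morph _ (ipDr z) (ip0r z)). Qed.

Lemma ipxx x : ip X x x = (hnorm2 x)%:C.
Proof. exact: ge0_C (ip_ge0 x). Qed.

Lemma hn_ge0 x : 0 <= hnorm2 x.
Proof. exact: ge0_Re (ip_ge0 x). Qed.

Lemma hn_eq0 x : hnorm2 x = 0 -> x = 0.
Proof. by move=> h; apply: ip_eq0; rewrite ipxx h. Qed.

Lemma ReC x y : complex.Re (ip X y x) = complex.Re (ip X x y).
Proof. rewrite ip_conj. exact: ReJ. Qed.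

Lemma ReZr z t x : complex.Re (ip X z (t%:C *: x)) = t * complex.Re (ip X z x).
Proof. by rewrite ipZr; case: (ip X z x) => a b /=; rewrite oppr0 mul0r subr0. Qed.

Lemma ReZ' z t x : complex.Re (ip X (t%:C *: x) z) = t * complex.Re (ip X x z).
Proof. rewrite ipZ. exact: ReCM. Qed.

Lemma quad (D : X -> X) (hD : forall t y z, D (t%:C *: y - z) = t%:C *: D y - D z) t x w :
  complex.Re (ip X (D (t%:C *: x - w)) (t%:C *: x - w)) =
  t^+2 * complex.Re (ip X (D x) x) - t * (complex.Re (ip X (D x) w) + complex.Re (ip X (D w) x))
  + complex.Re (ip X (D w) w).
Proof.
rewrite hD ipB !ipBr !(ReB, ReZ', ReZr). ring.
Qed.


Lemma psdb (D : X -> X) (hD : forall t y z, D (t%:C *: y - z) = t%:C *: D y - D z)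
  (hH : forall y z, complex.Re (ip X (D y) z) = complex.Re (ip X (D z) y))
  (M : R) (hM : 0 < M) (hpos : forall y, 0 <= complex.Re (ip X (D y) y))
  (hbd : forall y, complex.Re (ip X (D y) y) <= M * hnorm2 y) x :
  hnorm2 (D x) <= M * complex.Re (ip X (D x) x).
Proof.
have q := quad hD M x (D x).
have h1 := hpos (M%:C *: x - D x).
have h2 := hbd (D x).
rewrite q (hH (D x) x) in h1.
rewrite /hnorm2 in h2 *.
nra.
Qed.

Lemma hnD x y : hnorm2 (x + y) = hnorm2 x + hnorm2 y + 2 * complex.Re (ip X x y).
Proof. rewrite /hnorm2 ipD !ipDr !ReD (ReC x y). ring. Qed.

Lemma hnB x y : hnorm2 (x - y) = hnorm2 x + hnorm2 y - 2 * complex.Re (ip X x y).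
Proof. rewrite /hnorm2 ipB !ipBr !ReB (ReC x y). ring. Qed.

Lemma hnN x : hnorm2 (- x) = hnorm2 x.
Proof. by rewrite /hnorm2 ipN ipNr opprK. Qed.

Lemma hnZ t x : hnorm2 (t%:C *: x) = t ^+ 2 * hnorm2 x.
Proof. rewrite /hnorm2 ReZ' ReZr. ring. Qed.

Lemma hn_add_le x y : hnorm2 (x + y) <= 2 * hnorm2 x + 2 * hnorm2 y.
Proof. have := hn_ge0 (x - y). rewrite hnB hnD. lra. Qed.

Lemma re_le t x y : 2 * t * complex.Re (ip X x y) <= t ^+ 2 * hnorm2 x + hnorm2 y.
Proof. have := hn_ge0 (t%:C *: x - y). rewrite hnB hnZ ReZ'. lra. Qed.

Lemma re_le' t x y : - (2 * t * complex.Re (ip X x y)) <= t ^+ 2 * hnorm2 x + hnorm2 y.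
Proof. have := hn_ge0 (t%:C *: x + y). rewrite hnD hnZ ReZ'. lra. Qed.

Lemma hn_sub_sym x y : hnorm2 (x - y) = hnorm2 (y - x).
Proof. by rewrite -hnN opprB. Qed.


End Hil.

Section Lim.
Variable R : realType.

Definition cz (f : nat -> R) := forall e : R, 0 < e -> exists N : nat, forall n, (N <= n)%N -> `|f n| < e.

Lemma cz_le (f g : nat -> R) : (forall n, `|g n| <= f n) -> cz f -> cz g.
Proof.
move=> hfg hf e he; have [N hN] := hf e he; exists N => n hn.
exact: le_lt_trans (hfg n) (le_lt_trans (ler_norm _) (hN n hn)).
Qed.

Lemma cz_add (f g : nat -> R) : cz f -> cz g -> cz (fun n => f n + g n).
Proof.
move=> hf hg e he.
have he2 : 0 < e / 2 by rewrite divr_gt0.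
have [N1 h1] := hf _ he2; have [N2 h2] := hg _ he2.
exists (maxn N1 N2) => n hn.
have := h1 n (leq_trans (leq_maxl _ _) hn); have := h2 n (leq_trans (leq_maxr _ _) hn).
move=> a b; apply: (le_lt_trans (ler_normD _ _)). lra.
Qed.

Lemma cz_scale (c : R) (f : nat -> R) : cz f -> cz (fun n => c * f n).
Proof.
move=> hf e he.
have hc : 0 < `|c| + 1 by rewrite ltr_pwDr // normr_ge0.
have [N h] := hf (e / (`|c| + 1)) (divr_gt0 he hc).
exists N => n hn; rewrite normrM.
have := h n hn; rewrite ltr_pdivlMr // => h'.
apply: le_lt_trans h'.
have := normr_ge0 (f n); have := normr_ge0 c. nra.
Qed.

Lemma cz_shiftS (f : nat -> R) : cz f -> cz (fun n => f n.+1).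
Proof. move=> hf e he; have [N h] := hf e he; exists N => n hn; apply: h; exact: leqW. Qed.

Lemma cz_unshiftS (f : nat -> R) : cz (fun n => f n.+1) -> cz f.
Proof. move=> hf e he; have [N h] := hf e he; exists N.+1 => n hn. case: n hn => // n hn; exact: h. Qed.

Lemma cz_const (c : R) : cz (fun _ => c) -> c = 0.
Proof.
move=> h; apply/eqP; apply/negPn/negP => hc.
have hc' : 0 < `|c| by rewrite normr_gt0.
have [N hN] := h `|c| hc'.
by have := hN N (leqnn N); rewrite ltxx.
Qed.

Lemma cz_ge0 (a : nat -> R) (L : R) : (forall n, 0 <= a n) -> cz (fun n => a n - L) -> 0 <= L.
Proof.
move=> ha h; rewrite leNgt; apply/negP => hL.
have hL' : 0 < - L by rewrite oppr_gt0.
have [N hN] := h (- L) hL'.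
have := hN N (leqnn N); have := ha N.
rewrite ltr_norml => h1 /andP[_ h2]. lra.
Qed.

Lemma cz0 : cz (fun _ => 0).
Proof. by move=> e he; exists 0%N => n _; rewrite normr0. Qed.

Lemma cz_cvg (f : nat -> R) : cz f <-> (f @ \oo --> (0 : R)).
Proof.
split.
- move=> h; apply/cvgr0Pnorm_lt => e he.
  have [N hN] := h e he; exists N => // n /= hn; exact: hN.
- move=> /cvgr0Pnorm_lt h e he; have [N _ hN] := h e he.
  exists N => n hn; exact: hN.
Qed.

Lemma mono_cauchy (a : nat -> R) (B : R) : (forall n m, (n <= m)%N -> a n <= a m) ->
  (forall n, a n <= B) ->
  forall e, 0 < e -> exists N, forall n m, (N <= n)%N -> (n <= m)%N -> a m - a n < e.
Proof.
move=> hmono hB e he.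
have hs : has_sup (range a).
  split; first by exists (a 0%N), 0%N.
  by exists B => _ [n _ <-].
have [_ [N _ <-] hN] := sup_adherent he hs.
exists N => n m hn hnm.
have h1 : a m <= sup (range a) by apply: sup_upper_bound => //; exists m.
have h2 := hmono _ _ hn. lra.
Qed.
End Lim.


Section Conv.
Variables (R : realType).

Definition conv (X : hilbert R) (u : nat -> X) (l : X) := cz (fun n => hnorm2 (u n - l)).

Lemma nhn (X : hilbert R) (x : X) : `|hnorm2 x| = hnorm2 x.
Proof. by rewrite ger0_norm // hn_ge0. Qed.

Lemma conv_add (X : hilbert R) (u v : nat -> X) l m : conv u l -> conv v m ->
  conv (fun n => u n + v n) (l + m).
Proof.
move=> hu hv; apply: (cz_le (f := fun n => 2 * hnorm2 (u n - l) + 2 * hnorm2 (v n - m))).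
  move=> n; rewrite nhn.
  have -> : u n + v n - (l + m) = (u n - l) + (v n - m) by rewrite opprD addrACA.
  exact: hn_add_le.
by apply: cz_add; apply: cz_scale.
Qed.

Lemma conv_opp (X : hilbert R) (u : nat -> X) l : conv u l -> conv (fun n => - u n) (- l).
Proof.
move=> hu; apply: (cz_le (f := fun n => hnorm2 (u n - l))) => // n.
by rewrite nhn -opprD hnN.
Qed.

Lemma conv_const (X : hilbert R) (c : X) : conv (fun _ => c) c.
Proof.
apply: (cz_le (f := fun _ => 0)); last exact: cz0.
move=> n; rewrite subrr nhn /hnorm2 ip0 //.
Qed.

Lemma conv_sum (X : hilbert R) I (r : seq I) (P : pred I) (u : I -> nat -> X) (l : I -> X) :
  (forall i, conv (u i) (l i)) ->
  conv (fun n => \sum_(i <- r | P i) u i n) (\sum_(i <- r | P i) l i).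
Proof.
move=> h; elim: r => [|a r IH].
  rewrite big_nil; under eq_fun do rewrite big_nil; exact: conv_const.
rewrite big_cons; under eq_fun do rewrite big_cons.
case: (P a) => //; exact: conv_add.
Qed.

Lemma conv_map (X Y : hilbert R) (f : X -> Y) (M : R) :
  (forall x y, f (x - y) = f x - f y) -> (forall x, hnorm2 (f x) <= M * hnorm2 x) ->
  forall u l, conv u l -> conv (fun n => f (u n)) (f l).
Proof.
move=> hf hb u l hu; apply: (cz_le (f := fun n => M * hnorm2 (u n - l))).
  by move=> n; rewrite nhn -hf.
exact: cz_scale.
Qed.

Lemma conv_shiftS (X : hilbert R) (u : nat -> X) l : conv u l -> conv (fun n => u n.+1) l.
Proof. exact: cz_shiftS. Qed.

Lemma conv_unshiftS (X : hilbert R) (u : nat -> X) l : conv (fun n => u n.+1) l -> conv u l.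
Proof. exact: cz_unshiftS. Qed.

Lemma conv_unique (X : hilbert R) (u : nat -> X) l l' : conv u l -> conv u l' -> l = l'.
Proof.
move=> h1 h2.
have : cz (fun _ => hnorm2 (l - l')).
  apply: (cz_le (f := fun n => 2 * hnorm2 (u n - l) + 2 * hnorm2 (u n - l'))).
    move=> n; rewrite nhn.
    have -> : l - l' = (l - u n) + (u n - l') by rewrite addrA subrK.
    by rewrite (hn_sub_sym (u n) l); exact: hn_add_le.
  by apply: cz_add; apply: cz_scale.
move/cz_const/hn_eq0/eqP; rewrite subr_eq0 => /eqP //.
Qed.
End Conv.


Section ConvRe.
Variables (R : realType) (X : hilbert R).

Lemma conv_Re (u : nat -> X) l w : conv u l ->
  cz (fun n => complex.Re (ip X (u n) w) - complex.Re (ip X l w)).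
Proof.
move=> hu e he.
set c := hnorm2 w.
have hc : 0 <= c by exact: hn_ge0.
set T := (c + 1) / e.
have hT : 0 < T by apply: divr_gt0 => //; lra.
have hTe : T * e = c + 1 by rewrite /T mulrAC -mulrA divff ?mulr1 // lt0r_neq0.
have [N hN] := hu (e / T) (divr_gt0 he hT).
exists N => n hn.
have h1 := hN n hn; rewrite nhn ltr_pdivlMr // in h1.
rewrite -ReB -ipB.
set r := complex.Re _.
have a1 := re_le T (u n - l) w.
have a2 := re_le' T (u n - l) w.
rewrite -/r -/c in a1 a2.
have h2 : T * (T * hnorm2 (u n - l)) < T * e by rewrite ltr_pM2l // mulrC.
rewrite ltr_norml; apply/andP; split; nra.
Qed.

Lemma ReiZr z x : complex.Re (ip X z ('i *: x)) = complex.Im (ip X z x).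
Proof. by rewrite ipZr; case: (ip X z x) => a b /=; ring. Qed.

Lemma conv_Im (u : nat -> X) l w : conv u l ->
  cz (fun n => complex.Im (ip X (u n) w) - complex.Im (ip X l w)).
Proof. move=> /(conv_Re ('i *: w)). by under eq_fun do rewrite !ReiZr. Qed.
End ConvRe.


Section Tup.
Variables (V : nmodType) (d : nat).

Lemma sum_tupleS n (F : seq 'I_d -> V) :
  \sum_(w : n.+1.-tuple 'I_d) F w = \sum_(j < d) \sum_(v : n.-tuple 'I_d) F (j :: v).
Proof.
rewrite pair_big /=.
rewrite (reindex (fun p : 'I_d * n.-tuple 'I_d => [tuple of p.1 :: p.2])) /=; last first.
  exists (fun t : n.+1.-tuple 'I_d => (thead t, [tuple of behead t])).
    by move=> [j v] _; apply: (congr2 pair); [exact: theadE | exact: val_inj].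
  by move=> t _; rewrite [RHS]tuple_eta; apply: val_inj.
by [].
Qed.

Lemma sum_tupleSr n (F : seq 'I_d -> V) :
  \sum_(w : n.+1.-tuple 'I_d) F w = \sum_(j < d) \sum_(v : n.-tuple 'I_d) F (rcons v j).
Proof.
elim: n F => [|n IH] F.
  rewrite sum_tupleS; apply: eq_bigr => j _; apply: eq_bigr => v _.
  by case: v => -[|//] ?.
rewrite sum_tupleS.
under eq_bigr do rewrite (IH (fun s => F (_ :: s))).
rewrite exchange_big /=; apply: eq_bigr => j _.
rewrite (sum_tupleS n (fun s => F (rcons s j))).
by apply: eq_bigr => i _; apply: eq_bigr => v _.
Qed.
End Tup.


Section Ops.
Variable R : realType.

Definition lin (X Y : hilbert R) (f : X -> Y) :=
  forall (a : R[i]) (x y : X), f (a *: x + y) = a *: f x + f y.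

Section Lin.
Variables (X Y : hilbert R) (f : X -> Y) (hf : lin f).

Lemma lin0 : f 0 = 0.
Proof. have := hf 1 0 0; rewrite !scale1r addr0 => h. by apply: (addrI (f 0)); rewrite -h addr0. Qed.

Lemma linD x y : f (x + y) = f x + f y.
Proof. by have := hf 1 x y; rewrite !scale1r. Qed.

Lemma linZ a x : f (a *: x) = a *: f x.
Proof. by have := hf a x 0; rewrite !addr0 lin0 addr0. Qed.

Lemma linN x : f (- x) = - f x.
Proof. by rewrite -scaleN1r linZ scaleN1r. Qed.

Lemma linB x y : f (x - y) = f x - f y.
Proof. by rewrite linD linN. Qed.

Lemma lin_sum I (r : seq I) (P : pred I) (F : I -> X) :
  f (\sum_(i <- r | P i) F i) = \sum_(i <- r | P i) f (F i).
Proof. exact: (big_morph _ linD lin0). Qed.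

Lemma lin_t (t : R) y z : f (t%:C *: y - z) = t%:C *: f y - f z.
Proof. by rewrite linB linZ. Qed.
End Lin.

Lemma lin_comp (X Y Z : hilbert R) (f : X -> Y) (g : Y -> Z) : lin f -> lin g -> lin (fun x => g (f x)).
Proof. by move=> hf hg a x y; rewrite hf hg. Qed.

Lemma ip_ext_r (X : hilbert R) (u u' : X) : (forall x, ip X x u = ip X x u') -> u = u'.
Proof.
move=> h; apply/eqP; rewrite -subr_eq0; apply/eqP; apply: hn_eq0.
by rewrite /hnorm2 ipBr h subrr.
Qed.

Lemma ip_ext_l (X : hilbert R) (u u' : X) : (forall x, ip X u x = ip X u' x) -> u = u'.
Proof.
move=> h; apply/eqP; rewrite -subr_eq0; apply/eqP; apply: hn_eq0.
by rewrite /hnorm2 ipB h subrr.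
Qed.

Lemma adj_l (X Y : hilbert R) (f : X -> Y) fs : is_adjoint f fs ->
  forall x y, ip X (fs y) x = ip Y y (f x).
Proof. by move=> h x y; rewrite ip_conj -h -ip_conj. Qed.

Lemma adj_lin (X Y : hilbert R) (f : X -> Y) fs : is_adjoint f fs -> lin fs.
Proof.
move=> h a y z; apply: ip_ext_r => x.
by rewrite -h ipDr ipZr ipDr ipZr -!h.
Qed.

Lemma bop_pos (X Y : hilbert R) (f : X -> Y) : is_bop f ->
  exists M : R, 0 < M /\ forall x, hnorm2 (f x) <= M * hnorm2 x.
Proof.
move=> [_ [M hM]]; exists (`|M| + 1); split; first by rewrite ltr_pwDr // normr_ge0.
move=> x; apply: (le_trans (hM x)); apply: ler_wpM2r; first exact: hn_ge0.
by apply: le_trans (ler_norm M) _; rewrite lerDl.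
Qed.

Lemma adj_bound (X Y : hilbert R) (f : X -> Y) fs : is_bop f -> is_adjoint f fs ->
  exists M : R, 0 < M /\ forall y, hnorm2 (fs y) <= M * hnorm2 y.
Proof.
move=> hb ha; have [M [hM hMb]] := bop_pos hb.
exists M; split => // y.
have h1 := re_le (M^-1) (f (fs y)) y.
have e1 : complex.Re (ip Y (f (fs y)) y) = hnorm2 (fs y).
  by rewrite ha.
rewrite e1 in h1.
have h2 := hMb (fs y).
have hMi : 0 < M^-1 by rewrite invr_gt0.
have h3 : M^-1 ^+ 2 * hnorm2 (f (fs y)) <= M^-1 ^+ 2 * (M * hnorm2 (fs y)).
  by apply: ler_wpM2l => //; exact: exprn_ge0 (ltW hMi).
have e2 : M^-1 ^+ 2 * (M * hnorm2 (fs y)) = M^-1 * hnorm2 (fs y).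
  by rewrite expr2 -mulrA (mulrA _ M) mulVf ?mul1r // lt0r_neq0.
have h4 : M^-1 * hnorm2 (fs y) <= hnorm2 y by lra.
by rewrite -(ler_pM2l hMi) mulrA mulVf ?mul1r // lt0r_neq0.
Qed.

Lemma bop_re (X : hilbert R) (H : X -> X) : is_bop H ->
  exists K : R, 0 < K /\ forall x, complex.Re (ip X (H x) x) <= K * hnorm2 x.
Proof.
move=> hb; have [M [hM hMb]] := bop_pos hb.
exists (M + 1); split; first lra.
move=> x; have h := re_le 1 (H x) x; have h2 := hMb x; have := hn_ge0 x.
rewrite expr1n mul1r mulr1 in h. nra.
Qed.
End Ops.


Section Words.
Variables (R : realType) (X Y : hilbert R) (d : nat) (A Astar : 'I_d -> X -> X).

Lemma Aword_cons j v x : Aword A (j :: v) x = A j (Aword A v x).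
Proof. by []. Qed.

Lemma Aword_nil x : Aword A [::] x = x.
Proof. by []. Qed.

Lemma Aword_adj_nil y : Aword_adj Astar [::] y = y.
Proof. by []. Qed.

Lemma Aword_rcons v j x : Aword A (rcons v j) x = Aword A v (A j x).
Proof. by rewrite /Aword foldr_rcons. Qed.

Lemma Aword_adj_rcons v j y : Aword_adj Astar (rcons v j) y = Astar j (Aword_adj Astar v y).
Proof. by rewrite /Aword_adj foldl_rcons. Qed.

Lemma Aword_lin (hA : forall j, lin (A j)) v : lin (Aword A v).
Proof.
elim: v => [|i v IH] a x y //=.
by rewrite -/(Aword A v (a *: x + y)) IH hA.
Qed.

Lemma Aword_adjoint (hAs : forall j, is_adjoint (A j) (Astar j)) v :
  is_adjoint (Aword A v) (Aword_adj Astar v).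
Proof.
elim: v => [|i v IH] x y //=.
by rewrite -/(Aword A v x) hAs IH.
Qed.
End Words.

Lemma lin_sumf (R : realType) (X Y : hilbert R) I (r : seq I) (P : pred I) (F : I -> X -> Y) :
  (forall i, lin (F i)) -> lin (fun x => \sum_(i <- r | P i) F i x).
Proof.
move=> hF a x y; elim: r => [|i r IH]; first by rewrite !big_nil scaler0 addr0.
rewrite !big_cons; case: (P i) => //.
by rewrite hF IH scalerDr addrACA.
Qed.

Lemma sub4 (V : zmodType) (a b c e : V) : a - b - (c - e) = (a - c) - (b - e).
Proof. by rewrite !opprB addrACA [RHS]addrACA; congr (_ + _); rewrite addrC. Qed.


Section Gen.
Variables (R : realType) (X : hilbert R).

Lemma psd_reherm (H : X -> X) : lin H -> psd H ->
  forall y z, complex.Re (ip X (H y) z) = complex.Re (ip X (H z) y).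
Proof.
move=> hl hp y z.
have h := hp (y + 'i *: z); have hy := hp y; have hz := hp z.
rewrite linD // linZ // ipD !ipDr !ipZ !ipZr in h.
move: h hy hz.
case: (ip X (H y) y) => a1 a2; case: (ip X (H y) z) => b1 b2;
case: (ip X (H z) y) => c1 c2; case: (ip X (H z) z) => e1 e2.
rewrite !lecE /= => /andP[/eqP h1 _] /andP[/eqP h2 _] /andP[/eqP h3 _].
lra.
Qed.

Lemma hnZc (a : R[i]) (x : X) :
  hnorm2 (a *: x) = (complex.Re a ^+ 2 + complex.Im a ^+ 2) * hnorm2 x.
Proof.
rewrite /hnorm2 ipZ ipZr ipxx; case: a => a b /=. ring.
Qed.

Lemma mono_conv (P : nat -> X -> X) (M : R) x : 0 < M -> (forall n, lin (P n)) ->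
  (forall n y z, complex.Re (ip X (P n y) z) = complex.Re (ip X (P n z) y)) ->
  (forall n m y, (n <= m)%N -> 0 <= complex.Re (ip X (P m y) y) - complex.Re (ip X (P n y) y)) ->
  (forall n m y, (n <= m)%N -> complex.Re (ip X (P m y) y) - complex.Re (ip X (P n y) y) <= M * hnorm2 y) ->
  (exists B, forall n, complex.Re (ip X (P n x) x) <= B) ->
  exists l, conv (fun n => P n x) l.
Proof.
move=> hM hl hh hpos hbd [B hB].
have key : forall n m, (n <= m)%N -> hnorm2 (P m x - P n x) <=
    M * (complex.Re (ip X (P m x) x) - complex.Re (ip X (P n x) x)).
  move=> n m hnm.
  have := @psdb R X (fun y => P m y - P n y) _ _ M hM _ _ x.
  rewrite ipB ReB; apply.
  - by move=> t y z; rewrite (lin_t (hl m)) (lin_t (hl n)) sub4 scalerBr.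
  - by move=> y z /=; rewrite !ipB !ReB hh (hh n).
  - by move=> y /=; rewrite ipB ReB; exact: hpos.
  - by move=> y /=; rewrite ipB ReB; exact: hbd.
have hmono : forall n m, (n <= m)%N -> complex.Re (ip X (P n x) x) <= complex.Re (ip X (P m x) x).
  by move=> n m hnm; have := hpos n m x hnm; rewrite subr_ge0.
have [l hl'] : exists l : X, forall e : R, 0 < e -> exists N : nat, forall n : nat, (N <= n)%N ->
        complex.Re (ip X (P n x - l) (P n x - l)) < e.
  apply: hcomplete => e he.
  have [N hN] := mono_cauchy hmono hB (divr_gt0 he hM).
  exists N => m n hm hn.
  have H1 : forall a b, (N <= a)%N -> (a <= b)%N -> hnorm2 (P b x - P a x) < e.
    move=> a b ha hab; apply: (le_lt_trans (key a b hab)).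
    by rewrite mulrC -ltr_pdivlMr //; apply: hN.
  case: (leqP m n) => hmn.
    rewrite -/(hnorm2 _) hn_sub_sym; exact: H1.
  exact: H1 (ltnW hmn).
exists l => e he; have [N hN] := hl' e he; exists N => n hn; rewrite nhn; exact: hN.
Qed.

Lemma lim_op (P : nat -> X -> X) : (forall x, exists l, conv (fun n => P n x) l) ->
  exists L : X -> X, forall x, conv (fun n => P n x) (L x).
Proof.
move=> h; exists (fun x => projT1 (cid (h x))) => x; exact: projT2 (cid (h x)).
Qed.

Lemma conv_scale (u : nat -> X) l (a : R[i]) : conv u l -> conv (fun n => a *: u n) (a *: l).
Proof.
apply: (@conv_map R X X (fun z => a *: z) (complex.Re a ^+ 2 + complex.Im a ^+ 2)).
  by move=> y z; rewrite scalerBr.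
by move=> y; rewrite hnZc.
Qed.

Lemma lim_lin (P : nat -> X -> X) (L : X -> X) : (forall n, lin (P n)) ->
  (forall x, conv (fun n => P n x) (L x)) -> lin L.
Proof.
move=> hl hc a x y; apply: (conv_unique (hc (a *: x + y))).
under eq_fun do rewrite hl.
apply: conv_add => //; exact: conv_scale.
Qed.

Lemma lim_bound (P : nat -> X -> X) (L : X -> X) (K : R) :
  (forall n x, hnorm2 (P n x) <= K * hnorm2 x) ->
  (forall x, conv (fun n => P n x) (L x)) -> forall x, hnorm2 (L x) <= 2 * K * hnorm2 x.
Proof.
move=> hb hc x.
have := @cz_ge0 R (fun n => 2 * hnorm2 (P n x - L x) + 2 * K * hnorm2 x - hnorm2 (L x))
   (2 * K * hnorm2 x - hnorm2 (L x)).
rewrite subr_ge0; apply.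
  move=> n; rewrite subr_ge0.
  have e : L x = - (P n x - L x) + P n x by rewrite opprB subrK.
  rewrite [X in hnorm2 X]e; apply: (le_trans (hn_add_le _ _)).
  rewrite hnN; have := hb n x; lra.
apply: (cz_le (f := fun n => 2 * hnorm2 (P n x - L x))).
  move=> n; have -> : 2 * hnorm2 (P n x - L x) + 2 * K * hnorm2 x - hnorm2 (L x) - (2 * K * hnorm2 x - hnorm2 (L x)) = 2 * hnorm2 (P n x - L x) by ring.
  by rewrite ger0_norm // mulr_ge0 // hn_ge0.
by apply: cz_scale; exact: hc.
Qed.
End Gen.


Lemma sum_tuple0 (V : nmodType) (d : nat) (F : seq 'I_d -> V) :
  \sum_(v : 0.-tuple 'I_d) F v = F [::].
Proof.
rewrite (big_pred1 [tuple]) // => t /=.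
by apply/esym/eqP; exact: tuple0.
Qed.

Lemma sum_mono (R : realType) (f : nat -> R) (n m : nat) : (forall k, 0 <= f k) -> (n <= m)%N ->
  \sum_(k < n) f k <= \sum_(k < m) f k.
Proof.
move=> hf; elim: m => [|m IH]; first by rewrite leqn0 => /eqP ->.
rewrite leq_eqVlt => /orP[/eqP -> //|]; rewrite ltnS => /IH h.
by rewrite big_ord_recr /= (le_trans h) // lerDl.
Qed.

Lemma cz_uniq (R : realType) (a : nat -> R) (L L' : R) :
  cz (fun n => a n - L) -> cz (fun n => a n - L') -> L = L'.
Proof.
move=> h1 h2; apply/eqP; rewrite -subr_eq0; apply/eqP; apply: cz_const.
apply: (cz_le (f := fun n => `|a n - L'| + `|a n - L|)).
  move=> n.
  have -> : L - L' = (a n - L') - (a n - L) by ring.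
  exact: ler_normB.
apply: cz_add; move=> e he; [have [N hN] := h2 e he | have [N hN] := h1 e he];
  by exists N => n hn; rewrite normr_id; apply: hN.
Qed.


Section Main.
Variables (R : realType) (X Y : hilbert R) (d : nat) (A Astar : 'I_d -> X -> X)
  (C : X -> Y) (Cstar : Y -> X).
Hypotheses (hA : forall j, is_bop (A j)) (hAstar : forall j, is_adjoint (A j) (Astar j))
  (hC : is_bop C) (hCstar : is_adjoint C Cstar).

Lemma hAl j : lin (A j). Proof. exact: (hA j).1. Qed.

Lemma hCl : lin C. Proof. exact: hC.1. Qed.

Lemma hAsl j : lin (Astar j). Proof. exact: adj_lin (hAstar j). Qed.

Lemma hCsl : lin Cstar. Proof. exact: adj_lin hCstar. Qed.

Lemma hAv v : lin (Aword A v). Proof. exact: Aword_lin hAl v. Qed.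

Lemma hAvs v : is_adjoint (Aword A v) (Aword_adj Astar v). Proof. exact: Aword_adjoint hAstar v. Qed.

Lemma hAvsl v : lin (Aword_adj Astar v). Proof. exact: adj_lin (hAvs v). Qed.

Definition Sg K x := \sum_(N < K) \sum_(v : N.-tuple 'I_d) Aword_adj Astar v (Cstar (C (Aword A v x))).

Definition Tg (H : X -> X) N x := \sum_(v : N.-tuple 'I_d) Aword_adj Astar v (H (Aword A v x)).

Definition ob K x := \sum_(N < K) \sum_(v : N.-tuple 'I_d) hnorm2 (C (Aword A v x)).

Lemma Sg_lin K : lin (Sg K).
Proof.
apply: lin_sumf => N; apply: lin_sumf => v a x y.
by rewrite (hAv v) hCl hCsl (hAvsl v).
Qed.

Lemma Tg_lin H N : lin H -> lin (Tg H N).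
Proof.
move=> hH; apply: lin_sumf => v a x y.
by rewrite (hAv v) hH (hAvsl v).
Qed.

Lemma ip_Sg K x w : ip X (Sg K x) w =
  \sum_(N < K) \sum_(v : N.-tuple 'I_d) ip Y (C (Aword A v x)) (C (Aword A v w)).
Proof.
rewrite /Sg ip_suml; apply: eq_bigr => N _; rewrite ip_suml; apply: eq_bigr => v _.
by rewrite (adj_l (hAvs v)) (adj_l hCstar).
Qed.

Lemma ip_Tg H N x w : ip X (Tg H N x) w =
  \sum_(v : N.-tuple 'I_d) ip X (H (Aword A v x)) (Aword A v w).
Proof.
rewrite /Tg ip_suml; apply: eq_bigr => v _.
by rewrite (adj_l (hAvs v)).
Qed.

Lemma Re_Sg_sym K y z : complex.Re (ip X (Sg K y) z) = complex.Re (ip X (Sg K z) y).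
Proof.
rewrite !ip_Sg !Re_sum; apply: eq_bigr => N _; rewrite !Re_sum; apply: eq_bigr => v _.
exact: ReC.
Qed.

Lemma Re_Sg K x : complex.Re (ip X (Sg K x) x) = ob K x.
Proof.
rewrite ip_Sg Re_sum; apply: eq_bigr => N _; rewrite Re_sum; apply: eq_bigr => v _.
by [].
Qed.

Lemma Im_Sg K x : complex.Im (ip X (Sg K x) x) = 0.
Proof.
rewrite ip_Sg Im_sum big1 // => N _; rewrite Im_sum big1 // => v _.
by rewrite ipxx.
Qed.

Lemma ob_ge0 K x : 0 <= ob K x.
Proof. by apply: sumr_ge0 => N _; apply: sumr_ge0 => v _; exact: hn_ge0. Qed.

Lemma ob_mono n m x : (n <= m)%N -> ob n x <= ob m x.
Proof.
apply: (sum_mono (f := fun N => \sum_(v : N.-tuple 'I_d) hnorm2 (C (Aword A v x)))).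
by move=> k; apply: sumr_ge0 => v _; exact: hn_ge0.
Qed.

Lemma Sg_rec K x : Sg K.+1 x = Cstar (C x) + \sum_(j < d) Astar j (Sg K (A j x)).
Proof.
rewrite /Sg big_ord_recl /=; congr (_ + _).
  exact: (sum_tuple0 (fun v => Aword_adj Astar v (Cstar (C (Aword A v x))))).
symmetry; under eq_bigr => j _ do rewrite (lin_sum (hAsl j)).
rewrite exchange_big /=; apply: eq_bigr => i _.
symmetry; rewrite (sum_tupleSr i (fun w => Aword_adj Astar w (Cstar (C (Aword A w x))))).
apply: eq_bigr => j _; rewrite (lin_sum (hAsl j)); apply: eq_bigr => v _.
by rewrite Aword_adj_rcons Aword_rcons.
Qed.

Lemma Tg_rec H N x : Tg H N.+1 x = \sum_(j < d) Astar j (Tg H N (A j x)).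
Proof.
rewrite /Tg (sum_tupleSr N (fun w => Aword_adj Astar w (H (Aword A w x)))); apply: eq_bigr => j _; rewrite (lin_sum (hAsl j)); apply: eq_bigr => v _.
by rewrite Aword_adj_rcons Aword_rcons.
Qed.


Lemma iter_le (psi c : X -> R) : (forall y, c y + \sum_(j < d) psi (A j y) <= psi y) ->
  forall K x, \sum_(N < K) \sum_(v : N.-tuple 'I_d) c (Aword A v x)
              + \sum_(v : K.-tuple 'I_d) psi (Aword A v x) <= psi x.
Proof.
move=> h; elim=> [|K IH] x.
  by rewrite big_ord0 add0r (sum_tuple0 (fun v => psi (Aword A v x))).
rewrite big_ord_recr /= (sum_tupleS K (fun w => psi (Aword A w x))) /=.
rewrite exchange_big /= -addrA.
apply: le_trans (IH x); rewrite lerD2l -big_split /=.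
by apply: ler_sum => v _; exact: h.
Qed.


Lemma stein_ineq_re H : stein_ineq C Cstar A Astar H ->
  forall y, hnorm2 (C y) + \sum_(j < d) complex.Re (ip X (H (A j y)) (A j y))
            <= complex.Re (ip X (H y) y).
Proof.
move=> hs y; have h := ge0_Re (hs y); rewrite /= !ipB !ReB ip_suml Re_sum in h.
rewrite (adj_l hCstar) in h.
rewrite (eq_bigr (fun j => complex.Re (ip X (H (A j y)) (A j y)))) in h; last first.
  by move=> j _; rewrite (adj_l (hAstar j)).
rewrite -/(hnorm2 (C y)) in h. lra.
Qed.

Lemma stein_eq_re H : stein_eq C Cstar A Astar H ->
  forall y, hnorm2 (C y) + \sum_(j < d) complex.Re (ip X (H (A j y)) (A j y))
            = complex.Re (ip X (H y) y).
Proof.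
move=> hs y; have h := congr1 (fun z => complex.Re (ip X z y)) (hs y).
rewrite /= !ipB !ReB ip_suml Re_sum (adj_l hCstar) in h.
rewrite (eq_bigr (fun j => complex.Re (ip X (H (A j y)) (A j y)))) in h; last first.
  by move=> j _; rewrite (adj_l (hAstar j)).
rewrite -/(hnorm2 (C y)) in h. lra.
Qed.

Lemma spd_psd H : spd H -> forall y, 0 <= ip X (H y) y.
Proof.
move=> [eps [he h]] y; apply: le_trans (h y).
rewrite ipxx; apply: ge0_CP => /=; first by rewrite mulr0 mul0r addr0.
by rewrite mul0r subr0; apply: mulr_ge0; [exact: ltW | exact: hn_ge0].
Qed.

Lemma spd_re H : spd H -> exists eps, 0 < eps /\ forall y, eps * hnorm2 y <= complex.Re (ip X (H y) y).
Proof.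
move=> [eps [he h]]; exists eps; split => // y.
have := le_Re (h y); by rewrite ReCM.
Qed.

Lemma out_bound H : is_bop H -> spd H -> stein_ineq C Cstar A Astar H ->
  exists M, 0 < M /\ forall K x, ob K x <= M * hnorm2 x.
Proof.
move=> hb hs hi; have [KH [hK hKb]] := bop_re hb.
exists KH; split => // K x.
have h1 := iter_le (psi := fun y => complex.Re (ip X (H y) y)) (c := fun y => hnorm2 (C y))
  (stein_ineq_re hi) K x.
have h2 : 0 <= \sum_(v : K.-tuple 'I_d) complex.Re (ip X (H (Aword A v x)) (Aword A v x)).
  by apply: sumr_ge0 => v _; exact: ge0_Re (spd_psd hs _).
have := hKb x; rewrite /ob. lra.
Qed.


Lemma Sg_bound M0 : 0 < M0 -> (forall K x, ob K x <= M0 * hnorm2 x) ->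
  forall n y, hnorm2 (Sg n y) <= (M0 * M0) * hnorm2 y.
Proof.
move=> hM hb n y.
have h := @psdb R X (Sg n) (lin_t (Sg_lin n)) (Re_Sg_sym n) M0 hM _ _ y.
rewrite Re_Sg in h.
have := hb n y.
have : hnorm2 (Sg n y) <= M0 * ob n y.
  apply: h => z; rewrite Re_Sg; [exact: ob_ge0 | exact: hb].
move=> h1 h2; apply: (le_trans h1); rewrite -mulrA; apply: ler_wpM2l => //; exact: ltW.
Qed.

Lemma gram_exists M0 : 0 < M0 -> (forall K x, ob K x <= M0 * hnorm2 x) ->
  exists G, is_gramian C Cstar A Astar G.
Proof.
move=> hM hb.
have hconv : forall x, exists l, conv (fun K => Sg K x) l.
  move=> x; apply: (mono_conv (M := M0)) => //.
  - exact: Sg_lin.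
  - exact: Re_Sg_sym.
  - by move=> n m y hnm; rewrite !Re_Sg subr_ge0; exact: ob_mono.
  - move=> n m y hnm; rewrite !Re_Sg; have := ob_ge0 n y; have := hb m y; lra.
  - by exists (M0 * hnorm2 x) => n; rewrite Re_Sg; exact: hb.
have [G hG] := lim_op hconv.
exists G; split; last by move=> x; apply/cz_cvg; exact: (hG x).
split; first exact: (lim_lin Sg_lin hG).
exists (2 * (M0 * M0)) => x; rewrite -mulrA.
have := lim_bound (Sg_bound hM hb) hG x; by rewrite mulrA.
Qed.

Lemma gram_conv G : is_gramian C Cstar A Astar G -> forall x, conv (fun K => Sg K x) (G x).
Proof. by move=> [_ h] x; apply/cz_cvg; exact: h. Qed.

Lemma gram_lin G : is_gramian C Cstar A Astar G -> lin G.
Proof. by move=> [[h _] _]. Qed.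

Lemma gram_stein G : is_gramian C Cstar A Astar G -> stein_eq C Cstar A Astar G.
Proof.
move=> hG x.
have h1 := conv_shiftS (gram_conv hG x).
have h2 : conv (fun K => Sg K.+1 x) (Cstar (C x) + \sum_(j < d) Astar j (G (A j x))).
  under eq_fun do rewrite Sg_rec.
  apply: conv_add; first exact: conv_const.
  apply: conv_sum => j.
  have [M [hM hMb]] := adj_bound (hA j) (hAstar j).
  apply: (conv_map (M := M)) => //; last exact: gram_conv.
  exact: linB (hAsl j).
by rewrite (conv_unique h1 h2) addrK.
Qed.

Lemma gram_re G : is_gramian C Cstar A Astar G ->
  forall x, cz (fun K => ob K x - complex.Re (ip X (G x) x)).
Proof.
move=> hG x; have := conv_Re x (gram_conv hG x).
by under eq_fun do rewrite Re_Sg.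
Qed.

Lemma gram_psd G : is_gramian C Cstar A Astar G -> psd G.
Proof.
move=> hG x; apply: ge0_CP.
  have := conv_Im x (gram_conv hG x).
  under eq_fun do rewrite Im_Sg.
  move/cz_const; rewrite sub0r => /eqP; rewrite oppr_eq0 => /eqP //.
exact: cz_ge0 (fun K => ob_ge0 K x) (gram_re hG x).
Qed.


Lemma iter_eq H : stein_eq C Cstar A Astar H -> forall K x,
  ob K x + \sum_(v : K.-tuple 'I_d) complex.Re (ip X (H (Aword A v x)) (Aword A v x))
  = complex.Re (ip X (H x) x).
Proof.
move=> hs K x; apply/eqP; rewrite eq_le; apply/andP; split.
  apply: (iter_le (psi := fun y => complex.Re (ip X (H y) y)) (c := fun y => hnorm2 (C y))).
  by move=> y; rewrite (stein_eq_re hs).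
have := iter_le (psi := fun y => - complex.Re (ip X (H y) y)) (c := fun y => - hnorm2 (C y)) _ K x.
rewrite /ob.
under eq_bigr do rewrite sumrN.
rewrite sumrN sumrN -opprD lerNl opprK; apply.
by move=> y; rewrite sumrN -opprD lerN2 (stein_eq_re hs).
Qed.

Lemma lin_diff (F G : X -> X) : lin F -> lin G ->
  forall t y z, F (t%:C *: y - z) - G (t%:C *: y - z) = t%:C *: (F y - G y) - (F z - G z).
Proof. by move=> hF hG t y z; rewrite (lin_t hF) (lin_t hG) sub4 scalerBr. Qed.

Lemma uniq_of_stable G : strongly_stable A -> is_gramian C Cstar A Astar G ->
  unique_psd_stein_sol C Cstar A Astar G.
Proof.
move=> hst hG; split; [exact: hG.1 | exact: gram_psd | exact: gram_stein |].
move=> H hb hp hs.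
have [KH [hK hKb]] := bop_re hb.
have eqRe : forall x, complex.Re (ip X (H x) x) = complex.Re (ip X (G x) x).
  move=> x; apply: (cz_uniq (a := fun K => ob K x)); last exact: gram_re.
  apply: (cz_le (f := fun K => KH * \sum_(v : K.-tuple 'I_d) hnorm2 (Aword A v x))); last first.
    by apply: cz_scale; apply/cz_cvg; exact: hst.
  move=> K; rewrite -(iter_eq hs K x) opprD addrA subrr sub0r normrN.
  rewrite ger0_norm; last by apply: sumr_ge0 => v _; exact: ge0_Re (hp _).
  rewrite mulr_sumr; apply: ler_sum => v _; exact: hKb.
have hGl := gram_lin hG.
have hHl : lin H by exact: hb.1.
move=> x; apply/eqP; rewrite -subr_eq0; apply/eqP; apply: hn_eq0; apply/eqP.
rewrite eq_le hn_ge0 andbT.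
have := @psdb R X (fun y => H y - G y) (lin_diff hHl hGl) _ 1 ltr01 _ _ x.
rewrite /= ipB ReB eqRe subrr mulr0; apply.
- by move=> y z /=; rewrite !ipB !ReB (psd_reherm hHl hp) (psd_reherm hGl (gram_psd hG)).
- by move=> y /=; rewrite ipB ReB eqRe subrr.
- by move=> y /=; rewrite ipB ReB eqRe subrr mul1r hn_ge0.
Qed.


Lemma Re_Tg H n y : complex.Re (ip X (Tg H n y) y) =
  \sum_(v : n.-tuple 'I_d) complex.Re (ip X (H (Aword A v y)) (Aword A v y)).
Proof. by rewrite ip_Tg Re_sum. Qed.

Lemma Tg_dec H : stein_ineq C Cstar A Astar H -> forall n y,
  complex.Re (ip X (Tg H n.+1 y) y) <= complex.Re (ip X (Tg H n y) y).
Proof.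
move=> hi n y; rewrite !Re_Tg.
rewrite (sum_tupleS n (fun w => complex.Re (ip X (H (Aword A w y)) (Aword A w y)))) /=.
rewrite exchange_big /=; apply: ler_sum => v _.
have := stein_ineq_re hi (Aword A v y); have := hn_ge0 (C (Aword A v y)); lra.
Qed.

Lemma Tg_mono H : stein_ineq C Cstar A Astar H -> forall n m y, (n <= m)%N ->
  complex.Re (ip X (Tg H m y) y) <= complex.Re (ip X (Tg H n y) y).
Proof.
move=> hi n m y; elim: m => [|m IH]; first by rewrite leqn0 => /eqP ->.
rewrite leq_eqVlt => /orP[/eqP -> //|]; rewrite ltnS => /IH h.
exact: le_trans (Tg_dec hi m y) h.
Qed.

Lemma Tg_ge0 H : spd H -> forall n y, 0 <= complex.Re (ip X (Tg H n y) y).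
Proof. by move=> hs n y; rewrite Re_Tg; apply: sumr_ge0 => v _; exact: ge0_Re (spd_psd hs _). Qed.

Lemma Tg_0 H y : complex.Re (ip X (Tg H 0 y) y) = complex.Re (ip X (H y) y).
Proof. by rewrite Re_Tg (sum_tuple0 (fun v => complex.Re (ip X (H (Aword A v y)) (Aword A v y)))). Qed.

Lemma Im_Tg H : spd H -> forall n y, complex.Im (ip X (Tg H n y) y) = 0.
Proof.
move=> hs n y; rewrite ip_Tg Im_sum big1 // => v _.
by rewrite (ge0_C (spd_psd hs _)).
Qed.

Lemma Tg_herm H : lin H -> psd H -> forall n y z,
  complex.Re (ip X (Tg H n y) z) = complex.Re (ip X (Tg H n z) y).
Proof.
move=> hl hp n y z; rewrite !ip_Tg !Re_sum; apply: eq_bigr => v _.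
by rewrite (psd_reherm hl hp) ReC.
Qed.


Lemma cz_eq (f g : nat -> R) : (forall n, f n = g n) -> cz f -> cz g.
Proof. by move=> h hf e he; have [N hN] := hf e he; exists N => n hn; rewrite -h; exact: hN. Qed.

Lemma conv_eq (u v : nat -> X) l : (forall n, u n = v n) -> conv u l -> conv v l.
Proof. by move=> h; apply: cz_eq => n; rewrite h. Qed.

Lemma stable_of_uniq H G : is_bop H -> spd H -> stein_ineq C Cstar A Astar H ->
  unique_psd_stein_sol C Cstar A Astar G -> strongly_stable A.
Proof.
move=> hb hs hi [hGb hGp hGs hGu].
have hHl : lin H by exact: hb.1.
have hHp : psd H by exact: spd_psd hs.
have [KH [hK hKb]] := bop_re hb.
have hfb : forall n y, complex.Re (ip X (Tg H n y) y) <= KH * hnorm2 y.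
  by move=> n y; apply: le_trans (Tg_mono hi y (leq0n n)) _; rewrite Tg_0; exact: hKb.
have hconvT : forall x, exists l, conv (fun n => Tg H n x) l.
  move=> x; have [l hl] : exists l, conv (fun n => - Tg H n x) l.
    apply: (mono_conv (P := fun n y => - Tg H n y) (M := KH)) => //.
    - by move=> n a y z /=; rewrite (Tg_lin n hHl) opprD scalerN.
    - by move=> n y z /=; rewrite !ipN !ReN (Tg_herm hHl hHp).
    - by move=> n m y hnm /=; rewrite !ipN !ReN; have := Tg_mono hi y hnm; lra.
    - move=> n m y hnm /=; rewrite !ipN !ReN; have := Tg_ge0 hs m y; have := hfb n y; lra.
    - by exists 0 => n /=; rewrite ipN ReN; have := Tg_ge0 hs n x; lra.
  exists (- l); apply: (conv_eq (u := fun n => - - Tg H n x)); first by move=> n; rewrite opprK.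
  exact: conv_opp.
have [D hD] := lim_op hconvT.
have hDl : lin D by exact: lim_lin (fun n => Tg_lin n hHl) hD.
have hTb : forall n y, hnorm2 (Tg H n y) <= (KH * KH) * hnorm2 y.
  move=> n y.
  have h := @psdb R X (Tg H n) (lin_t (Tg_lin n hHl)) (Tg_herm hHl hHp n) KH hK (Tg_ge0 hs n) (hfb n) y.
  apply: (le_trans h); rewrite -mulrA; apply: ler_wpM2l; [exact: ltW | exact: hfb].
have hDb := lim_bound hTb hD.
have hDre : forall x, cz (fun n => complex.Re (ip X (Tg H n x) x) - complex.Re (ip X (D x) x)).
  by move=> x; exact: conv_Re x (hD x).
have hDp : psd D.
  move=> x; apply: ge0_CP; last exact: cz_ge0 (fun n => Tg_ge0 hs n x) (hDre x).
  have := conv_Im x (hD x).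
  under eq_fun do rewrite (Im_Tg hs).
  move/cz_const; rewrite sub0r => /eqP; rewrite oppr_eq0 => /eqP //.
have hDh : forall x, D x - \sum_(j < d) Astar j (D (A j x)) = 0.
  move=> x; have h1 := conv_shiftS (hD x).
  have h2 : conv (fun n => Tg H n.+1 x) (\sum_(j < d) Astar j (D (A j x))).
    under eq_fun do rewrite Tg_rec.
    apply: conv_sum => j.
    have [M [hM hMb]] := adj_bound (hA j) (hAstar j).
    exact: (conv_map (linB (hAsl j)) hMb (hD (A j x))).
  by rewrite (conv_unique h1 h2) subrr.
have hG'u := hGu (fun x => G x + D x).
have hD0 : forall x, D x = 0.
  move=> x; apply: (addrI (G x)); rewrite addr0; apply: hG'u.
  - split.
      by move=> a y z; rewrite (hGb.1) hDl scalerDr addrACA.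
    have [MG [hMG hMGb]] := bop_pos hGb.
    exists (2 * MG + 2 * (2 * (KH * KH))) => y.
    apply: (le_trans (hn_add_le _ _)).
    have := hMGb y; have := hDb y; have := hn_ge0 y. nra.
  - by move=> y; rewrite ipD; apply: addr_ge0; [exact: hGp | exact: hDp].
  - move=> y /=.
    under eq_bigr do rewrite (linD (hAsl _)).
    by rewrite big_split /= opprD addrACA hGs hDh addr0.
move=> x; apply/cz_cvg.
have [eps [he hep]] := spd_re hs.
apply: (cz_le (f := fun n => eps^-1 * complex.Re (ip X (Tg H n x) x))).
  move=> n; rewrite ger0_norm; last by apply: sumr_ge0 => v _; exact: hn_ge0.
  rewrite Re_Tg mulr_sumr; apply: ler_sum => v _.
  rewrite -[hnorm2 _]mul1r -(mulVf (lt0r_neq0 he)) -mulrA.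
  by apply: ler_wpM2l (hep _); apply/ltW; rewrite invr_gt0.
apply: cz_scale; apply: (cz_eq _ (hDre x)) => n.
by rewrite hD0 ip0 Re0 subr0.
Qed.


Lemma part1 : (exists H : X -> X, [/\ is_bop H, spd H & stein_ineq C Cstar A Astar H]) ->
     [/\ output_stable C A,
         exists G, is_gramian C Cstar A Astar G &
         forall G, is_gramian C Cstar A Astar G ->
           (unique_psd_stein_sol C Cstar A Astar G <-> strongly_stable A)].
Proof.
move=> [H [hb hs hi]].
have [M0 [hM0 hob]] := out_bound hb hs hi.
split.
- by exists M0 => x K; exact: hob.
- exact: gram_exists hM0 hob.
- move=> G hG; split; first by move=> hu; exact: stable_of_uniq hb hs hi hu.
  by move=> hst; exact: uniq_of_stable hst hG.
Qed.

Lemma part2 : (exists H : X -> X, [/\ is_bop H, spd H & stein_eq C Cstar A Astar H]) ->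
     [/\ output_stable C A,
         exists G, is_gramian C Cstar A Astar G &
         forall G, is_gramian C Cstar A Astar G ->
           (unique_psd_stein_sol C Cstar A Astar G <-> strongly_stable A) /\
           (strongly_stable A -> exactly_observable G)].
Proof.
move=> [H [hb hs he]].
have hi : stein_ineq C Cstar A Astar H.
  by move=> x /=; rewrite he subrr ip0 lexx.
case: (part1 (ex_intro _ H (And3 hb hs hi))) => hos hex hiff.
split => // G hG; split; first exact: hiff.
move=> hst; have [_ _ _ hU] := uniq_of_stable hst hG.
have hHG := hU H hb (spd_psd hs) he.
have [eps [he' hep]] := hs.
by exists eps; split => // x; rewrite -hHG; exact: hep.
Qed.

End Main.




Local Close Scope complex_scope.
Local Close Scope classical_set_scope.
Local Open Scope ring_scope.

Theorem proposition2p6 (R : realType) (X Y : hilbert R) (d : nat)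
  (A Astar : 'I_d -> X -> X) (C : X -> Y) (Cstar : Y -> X)
  (hA : forall j, is_bop (A j)) (hAstar : forall j, is_adjoint (A j) (Astar j))
  (hC : is_bop C) (hCstar : is_adjoint C Cstar) :
  ((exists H : X -> X, [/\ is_bop H, spd H & stein_ineq C Cstar A Astar H]) ->
     [/\ output_stable C A,
         exists G, is_gramian C Cstar A Astar G &
         forall G, is_gramian C Cstar A Astar G ->
           (unique_psd_stein_sol C Cstar A Astar G <-> strongly_stable A)])
  /\
  ((exists H : X -> X, [/\ is_bop H, spd H & stein_eq C Cstar A Astar H]) ->
     [/\ output_stable C A,
         exists G, is_gramian C Cstar A Astar G &
         forall G, is_gramian C Cstar A Astar G ->
           (unique_psd_stein_sol C Cstar A Astar G <-> strongly_stable A) /\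
           (strongly_stable A -> exactly_observable G)]).
Proof.
split; [exact: part1 | exact: part2].
Qed.
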